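(* Let $\pi:(X,T)\to(Y,T)$ be an almost one-to-one (respectively proximal, equicontinuous, distal) extension between minimal systems. Then for every $d\in\mathbb{N}$, $\pi^{(d)}:(N_d(X),\mathcal{G}_d(T))\to(N_d(Y),\mathcal{G}_d(T))$ is also almost one-to-one (respectively proximal, equicontinuous, distal).
   Context: $\pi^{(d)}=\pi\times\cdots\times\pi$; $N_d(X)=\overline{\{(T^{p+q}x,\dots,T^{p+dq}x)\}}$; $\mathcal{G}_d(T)=\langle T\times\cdots\times T,\ T\times T^2\times\cdots\times T^d\rangle$. For an extension $\phi:(X,G)\to(Y,G)$ with $R_\phi=\{(x,x'):\phi(x)=\phi(x')\}$: almost one-to-one means some fibre is a singleton; proximal means every pair in $R_\phi$ satisfies $\inf_g\rho(gx,gx')=0$; distal means no pair of distinct points of $R_\phi$ is proximal; equicontinuous means for every $\varepsilon>0$ there is $\delta>0$ with $\sup_g\rho(gx,gx')<\varepsilon$ whenever $(x,x')\in R_\phi$, $\rho(x,x')<\delta$. *)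

(* Defs.v *)
From HB Require Import structures.
From mathcomp Require Import all_boot all_order all_algebra.
From mathcomp Require Import all_classical all_reals all_analysis.
Set Implicit Arguments. Unset Strict Implicit. Unset Printing Implicit Defensive.
Import Order.TTheory GRing.Theory Num.Theory.
Local Open Scope classical_set_scope.
Local Open Scope ring_scope.

(* Z-action generated by a homeomorphism T with inverse Tinv:
   iterz T Tinv n = T^n  (n : int). *)
Definition iterz {X : Type} (T Tinv : X -> X) (n : int) : X -> X :=
  match n with
  | Posz k => iter k T
  | Negz k => iter k.+1 Tinv
  end.

Definition minimal_sys {X : topologicalType} (T Tinv : X -> X) : Prop :=
  forall x : X, closure [set iterz T Tinv n x | n in [set: int]] = [set: X].

(* The diagonal-type element tau_{p,q} = T^{p+q} x T^{p+2q} x ... x T^{p+dq}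
   of G_d(T) = < T x ... x T, T x T^2 x ... x T^d >, acting on X^d
   (represented as row vectors 'rV[X]_d, coordinate i <-> exponent p+(i+1)q).
   Every element of G_d(T) is of this form, and (p,q) |-> tau_{p,q} is onto. *)
Definition tau {X : Type} (T Tinv : X -> X) (d : nat) (pq : int * int)
  (M : 'rV[X]_d) : 'rV[X]_d :=
  \row_(i < d) iterz T Tinv (pq.1 + (i.+1)%:Z * pq.2) (M 0 i).

Definition Nd {X : topologicalType} (T Tinv : X -> X) (d : nat) : set 'rV[X]_d :=
  closure [set M | exists (x : X) (p q : int),
             M = \row_(i < d) iterz T Tinv (p + (i.+1)%:Z * q) x].

Definition pid {X Y : Type} (pi : X -> Y) (d : nat) (M : 'rV[X]_d) : 'rV[Y]_d :=
  map_mx pi M.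

(* Properties of an extension f : (A, G) -> (B, G), where A (resp. B) is the
   invariant subset of the phase space carrying the system, and act is the
   action of the group G (on the domain). The metric rho is expressed through
   the balls of the (pseudo)metric structure: rho(x,x') < e <-> ball x e x'. *)

Definition ext_almost_one_to_one {U V : Type} (A : set U) (B : set V)
  (f : U -> V) : Prop :=
  exists y : V, B y /\ exists x : U, A `&` f @^-1` [set y] = [set x].

Definition proximal_pair {R : numDomainType} {U : pseudoMetricType R}
  {G : Type} (act : G -> U -> U) (x x' : U) : Prop :=
  forall e : R, 0 < e -> exists g : G, ball (act g x) e (act g x').

Definition ext_proximal {R : numDomainType} {U : pseudoMetricType R} {V : Type}
  {G : Type} (act : G -> U -> U) (A : set U) (f : U -> V) : Prop :=
  forall x x', A x -> A x' -> f x = f x' -> proximal_pair act x x'.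

Definition ext_distal {R : numDomainType} {U : pseudoMetricType R} {V : Type}
  {G : Type} (act : G -> U -> U) (A : set U) (f : U -> V) : Prop :=
  forall x x', A x -> A x' -> f x = f x' -> proximal_pair act x x' -> x = x'.

Definition ext_equicontinuous {R : numDomainType} {U : pseudoMetricType R}
  {V : Type} {G : Type} (act : G -> U -> U) (A : set U) (f : U -> V) : Prop :=
  forall e : R, 0 < e -> exists2 delta : R, 0 < delta &
    forall x x', A x -> A x' -> f x = f x' -> ball x delta x' ->
      forall g : G, ball (act g x) e (act g x').

Arguments pid {X Y} pi d M.
Arguments tau {X} T Tinv d pq M.
Arguments Nd {X} T Tinv d _.

(* Main.v *)
Require Import Defs.
From HB Require Import structures.
From mathcomp Require Import all_boot all_order all_algebra.
From mathcomp Require Import all_classical all_reals all_analysis.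
From mathcomp Require Import zify lra.
Import Order.TTheory GRing.Theory Num.Theory.
Local Open Scope classical_set_scope.
Local Open Scope ring_scope.



Section Gen.
Context {R : realType}.

Definition ball_cont {U V : pseudoMetricType R} (f : U -> V) :=
  forall x e, 0 < e -> exists2 d, 0 < d & forall z, ball x d z -> ball (f x) e (f z).

Lemma cont_ball_cont {U V : pseudoMetricType R} (f : U -> V) :
  continuous f -> ball_cont f.
Proof.
move=> hf x e e0.
have h1 : \forall z \near x, ball (f x) e (f z).
  exact: (cvg_ball (hf x) e0).
move/nbhs_ballP: h1 => [d d0 hd].
by exists d => // z /hd.
Qed.

Lemma closure_ballP {U : pseudoMetricType R} (A : set U) x :
  closure A x <-> forall e, 0 < e -> exists y, A y /\ ball x e y.
Proof.
split.
  move=> hx e e0; have [y [Ay By]] := hx _ (nbhsx_ballx x _ e0).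
  by exists y.
move=> h B /nbhs_ballP [e e0 he].
have [y [Ay By]] := h e e0; exists y; split => //; exact: he.
Qed.

Lemma metric_ball_eq {U : metricType R} (x y : U) :
  (forall e, 0 < e -> ball x e y) -> x = y.
Proof.
move=> h; apply: mdist_positivity.
apply/eqP; rewrite eq_le mdist_ge0 andbT leNgt; apply/negP => hd.
by have := h _ hd; rewrite ballEmdist /= ltxx.
Qed.

Lemma mx_ballE {U : pseudoMetricType R} m n (M N : 'M[U]_(m, n)) e :
  ball M e N <-> (0 < e /\ forall i j, ball (M i j) e (N i j)).
Proof. by []. Qed.

Lemma mx_ball_eq {U : metricType R} m n (M N : 'M[U]_(m, n)) :
  (forall e, 0 < e -> ball M e N) -> M = N.
Proof.
move=> h; apply/matrixP => i j; apply: metric_ball_eq => e e0.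
by have [_ ] := h e e0; apply.
Qed.

Lemma map_mx_ball_cont {U V : pseudoMetricType R} m n (f : U -> V) :
  ball_cont f -> ball_cont (fun M : 'M[U]_(m, n) => map_mx f M).
Proof.
move=> hf M e e0.
have : nbhs M [set N : 'M[U]_(m, n) | forall ij : 'I_m * 'I_n,
   ball (f (M ij.1 ij.2)) e (f (N ij.1 ij.2))].
  apply: (@filter_forall _ _ (fun ij (N : 'M[U]_(m, n)) =>
    ball (f (M ij.1 ij.2)) e (f (N ij.1 ij.2))) (nbhs M) _) => -[i j] /=.
  have [d d0 hd] := hf (M i j) e e0.
  apply/nbhs_ballP; exists d => // N [_ hN]; exact: hd.
move=> /nbhs_ballP [d d0 hd]; exists d => // N /hd hN.
split => // i j; rewrite !mxE; exact: (hN (i, j)).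
Qed.

End Gen.



Section Gen2.
Context {R : realType}.

Lemma mx_compact {U : pseudoMetricType R} m n :
  compact [set: U] -> compact [set: 'M[U]_(m, n)].
Proof.
rewrite !compact_ultra /= => cU F FU _.
have [M0 _] := filter_ex (@filterT _ F _).
pose pr (ij : 'I_m * 'I_n) (M : 'M[U]_(m, n)) : U := M ij.1 ij.2.
have surj ij : pr ij @` [set: 'M[U]_(m, n)] = [set: U].
  rewrite predeqE => u; split => // _.
  exists (\matrix_(i, j) if (i, j) == ij then u else M0 i j) => //.
  by rewrite /pr mxE -surjective_pairing eqxx.
have hp ij : exists p : U, ([set pr ij @` A | A in F] : set_system U) --> p.
  have UF := @ultra_image _ _ (pr ij) F FU (surj ij).
  have [p [_ hp]] := cU _ UF (ex_intro2 _ _ setT filterT (surj ij)).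
  by exists p.
have [p hpP] := choice hp.
exists (\matrix_(i, j) p (i, j)); split => //.
apply/fcvg_ballP => e e0.
apply: (@filterS _ _ _ [set N : 'M[U]_(m, n) | forall ij : 'I_m * 'I_n,
    ball (p ij) e (N ij.1 ij.2)]).
  move=> N hN; split => // i j; rewrite mxE; exact: (hN (i, j)).
apply: (@filter_forall _ _ (fun ij (N : 'M[U]_(m, n)) =>
    ball (p ij) e (N ij.1 ij.2)) F _) => -[i j] /=.
have UF := @ultra_image _ _ (pr (i, j)) F FU (surj (i, j)).
have := fcvg_ball (hpP (i, j)) e0.
move=> [A FA hA]; apply: filterS FA => N AN.
have : (pr (i, j) @` A) (pr (i, j) N) by exists N.
by rewrite hA.
Qed.
End Gen2.



Section Gen3.
Context {R : realType}.

Lemma compact_from {W : topologicalType} {I : Type} (D : set I) (B : I -> set W) :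
  compact [set: W] -> (exists i, D i) ->
  (forall i j, D i -> D j -> exists2 k, D k & B k `<=` B i `&` B j) ->
  (forall i, D i -> B i !=set0) ->
  exists x, forall i, D i -> closure (B i) x.
Proof.
move=> cW hD hdir hne.
have FF := filter_from_filter hD hdir.
have PF := filter_from_proper FF hne.
have [x [_ cl]] := cW _ PF (@filterT _ _ FF).
exists x => i Di C Cx; apply: cl => //; exists i => //.
Qed.

Lemma image_closure {U V : pseudoMetricType R} (f : U -> V) (A : set U) :
  compact [set: U] -> ball_cont f ->
  (forall a b : V, (forall e, 0 < e -> ball a e b) -> a = b) ->
  f @` closure A = closure (f @` A).
Proof.
move=> cU hf heq; rewrite predeqE => y; split.
  move=> [x /closure_ballP clx <-]; apply/closure_ballP => e e0.
have [d d0 hd] := hf x e e0.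
have [z [Az Bz]] := clx d d0.
  by exists (f z); split; [exists z|exact: hd].
move=> /closure_ballP cly.
have : exists x, forall e, 0 < e -> closure (A `&` f @^-1` ball y e) x.
apply: (@compact_from U R [set e | 0 < e]
    (fun e => A `&` f @^-1` ball y e) cU (ex_intro _ 1 ltr01)).
  - move=> e1 e2 e10 e20; exists (Num.min e1 e2); first by rewrite /= lt_min e10.
    move=> z [Az Bz]; split; split => //; apply: le_ball Bz;
      by rewrite ge_min lexx ?orbT.
  - move=> e e0; have [_ [[z Az <-] Bz]] := cly e e0.
    by exists z; split => //; apply: ball_sym.
move=> [x hx].
exists x.
    apply/closure_ballP => e e0.
    have /closure_ballP := hx 1 ltr01.
    move=> /(_ e e0) [z [[Az _] Bz]]; by exists z.
apply: heq => e e0.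
have e20 : 0 < e / 2 by rewrite divr_gt0.
have [d d0 hd] := hf x _ e20.
have /closure_ballP := hx _ e20.
move=> /(_ d d0) [z [[Az Bz] Bxz]].
apply: (@ball_splitl _ _ (f z)); [exact: hd|exact: Bz].
Qed.

End Gen3.



Section Iterz.
Context {X : Type} (T Tinv : X -> X) (hTK : cancel T Tinv) (hTinvK : cancel Tinv T).

Lemma iterzD1 (n : int) x : iterz T Tinv (n + 1) x = T (iterz T Tinv n x).
Proof.
case: n => [k|k].
  have -> : (Posz k + 1 = Posz k.+1)%R by lia.
  by [].
case: k => [|k]; first by rewrite /= hTinvK.
have -> : (Negz k.+1 + 1 = Negz k)%R by rewrite !NegzE; lia.
by rewrite /= hTinvK.
Qed.

Lemma iterzN1 (n : int) x : iterz T Tinv (n - 1) x = Tinv (iterz T Tinv n x).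
Proof.
by rewrite -{2}(subrK 1 n) iterzD1 hTK.
Qed.

Lemma iterz_add (m n : int) x :
  iterz T Tinv (m + n) x = iterz T Tinv m (iterz T Tinv n x).
Proof.
case: m => [k|k].
  elim: k => [|k IH]; first by rewrite add0r.
  have -> : (Posz k.+1 + n = (Posz k + n) + 1)%R by lia.
  by rewrite iterzD1 IH.
elim: k => [|k IH].
  have -> : (Negz 0 + n = n - 1)%R by rewrite NegzE; lia.
  by rewrite iterzN1.
have -> : (Negz k.+1 + n = (Negz k + n) - 1)%R by rewrite !NegzE; lia.
by rewrite iterzN1 IH.
Qed.

Lemma iterz0 x : iterz T Tinv 0 x = x.
Proof. by []. Qed.

End Iterz.

Lemma iterz_equiv {X Y : Type} (T Tinv : X -> X) (S Sinv : Y -> Y) (pi : X -> Y)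
  (hTK : cancel T Tinv) (hTinvK : cancel Tinv T)
  (hSK : cancel S Sinv) (hSinvK : cancel Sinv S)
  (pi_equiv : forall x, pi (T x) = S (pi x)) n x :
  pi (iterz T Tinv n x) = iterz S Sinv n (pi x).
Proof.
have pinv y : pi (Tinv y) = Sinv (pi y).
  by rewrite -{2}(hTinvK y) pi_equiv hSK.
have h1 k y : pi (iter k T y) = iter k S (pi y).
  by elim: k => [|k IH] //=; rewrite pi_equiv IH.
have h2 k y : pi (iter k Tinv y) = iter k Sinv (pi y).
  by elim: k => [|k IH] //=; rewrite pinv IH.
by case: n => k; [exact: h1|exact: h2].
Qed.

Lemma iter_cont {X : topologicalType} (f : X -> X) k :
  continuous f -> continuous (iter k f).
Proof.
move=> hf; elim: k => [|k IH] /=; first by move=> x; exact: cvg_id.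
move=> x; apply: (continuous_comp (IH x)); exact: hf.
Qed.

Lemma iterz_cont {X : topologicalType} (T Tinv : X -> X) n :
  continuous T -> continuous Tinv -> continuous (iterz T Tinv n).
Proof. by move=> hT hTi; case: n => k /=; apply: iter_cont. Qed.



Lemma small_inv (R : realType) (e : R) : 0 < e -> exists k : nat, k.+1%:R^-1 < e.
Proof.
move=> e0; exists (Num.truncn e^-1).
by rewrite -ltf_pV2 ?(posrE,divr_gt0) ?invr_gt0 // invrK truncnS_gt.
Qed.

Arguments small_inv {R e}.

Lemma ball3 (R : realType) (U : pseudoMetricType R) (a b c d : U) e1 e2 e3 e :
  e1 + e2 + e3 <= e ->
  ball a e1 b -> ball b e2 c -> ball c e3 d -> ball a e d.
Proof.
move=> he h1 h2 h3; apply: (le_ball he).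
exact: (ball_triangle (ball_triangle h1 h2) h3).
Qed.

Arguments ball3 {R U a b c d e1 e2 e3 e}.

Section Simul.
Context {R : realType} {X Y : metricType R} (T Tinv : X -> X) (S Sinv : Y -> Y)
  (pi : X -> Y) (cX : compact [set: X])
  (hT : continuous T) (hTinv : continuous Tinv)
  (hTK : cancel T Tinv) (hTinvK : cancel Tinv T)
  (hSK : cancel S Sinv) (hSinvK : cancel Sinv S)
  (hpi : continuous pi) (pi_equiv : forall x, pi (T x) = S (pi x))
  (hprox : ext_proximal (iterz T Tinv) [set: X] pi).

Lemma simul d (P : 'M[X]_(2, d)) (hP : forall i, pi (P 0 i) = pi (P 1 i))
  (s : seq 'I_d) :
  forall e, 0 < e -> exists n : int, forall i, i \in s ->
    ball (iterz T Tinv n (P 0 i)) e (iterz T Tinv n (P 1 i)).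
Proof.
elim: s => [|j s IH] e e0; first by exists 0.
pose good (k : nat) (n : int) := forall i, i \in s ->
  ball (iterz T Tinv n (P 0 i)) (k.+1%:R^-1) (iterz T Tinv n (P 1 i)).
pose G (k : nat) := [set map_mx (iterz T Tinv n) P | n in good k].
have [Q hQ] : exists Q, forall k, [set: nat] k -> closure (G k) Q.
  apply: compact_from.
  - exact: mx_compact.
  - by exists 0%N.
  - move=> k1 k2 _ _; exists (maxn k1 k2) => //.
    move=> _ [n gn <-]; split; exists n => // i /gn; apply: le_ball;
      by rewrite lef_pV2 ?posrE // ler_nat ltnS ?leq_maxl ?leq_maxr.
  - move=> k _; have [n hn] := IH (k.+1%:R^-1) (ltac:(by rewrite invr_gt0)).
    by exists (map_mx (iterz T Tinv n) P), n.
have cl1 : forall i, i \in s -> Q 0 i = Q 1 i.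
  move=> i si; apply: metric_ball_eq => e' e'0.
  have e3 : 0 < e' / 3 by rewrite divr_gt0.
  have [k hk] := small_inv e3.
  have /closure_ballP := hQ k I.
  move=> /(_ _ e3) [_ [[n gn <-] [_ hb]]].
  have h2 := gn i si.
  have h1 := hb 0 i; have h3 := ball_sym (hb 1 i).
  rewrite !mxE in h1 h3.
  apply: (ball3 _ h1 (le_ball (ltW hk) h2) h3).
  lra.
have piP n i : pi (iterz T Tinv n (P 0 i)) = pi (iterz T Tinv n (P 1 i)).
  by rewrite !(iterz_equiv T Tinv S Sinv pi hTK hTinvK hSK hSinvK pi_equiv) hP.
have cl2 : pi (Q 0 j) = pi (Q 1 j).
  apply: metric_ball_eq => e' e'0.
  have e2 : 0 < e' / 2 by rewrite divr_gt0.
  have [d1 d10 hd1] := cont_ball_cont _ hpi (Q 0 j) _ e2.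
  have [d2 d20 hd2] := cont_ball_cont _ hpi (Q 1 j) _ e2.
  have dm : 0 < Num.min d1 d2 by rewrite lt_min d10.
  have /closure_ballP := hQ 0%N I.
  move=> /(_ _ dm) [_ [[n gn <-] [_ hb]]].
  have h1 := hb 0 j; have h2 := hb 1 j; rewrite !mxE in h1 h2.
  have m1 : Num.min d1 d2 <= d1 by rewrite ge_min lexx.
  have m2 : Num.min d1 d2 <= d2 by rewrite ge_min lexx orbT.
  have b1 := hd1 _ (le_ball m1 h1).
  have b2 := hd2 _ (le_ball m2 h2).
  rewrite piP in b1.
  exact: ball_splitl b1 b2.
have e3 : 0 < e / 3 by rewrite divr_gt0.
have [n0 hn0] := hprox (Q 0 j) (Q 1 j) I I cl2 _ e3.
have [dl dl0 hdl] := map_mx_ball_cont 2 d _ (cont_ball_cont _ (iterz_cont T Tinv n0 hT hTinv)) Q _ e3.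
have /closure_ballP := hQ 0%N I.
move=> /(_ _ dl0) [_ [[m gm <-] hb]].
have [_ hc] := hdl _ hb.
exists (n0 + m) => i; rewrite inE => /orP [/eqP ->|si];
  rewrite !(iterz_add T Tinv hTK hTinvK).
  have h1 := hc 0 j; have h3 := hc 1 j; rewrite !mxE in h1 h3.
  apply: (ball3 _ (ball_sym h1) hn0 h3); lra.
have h1 := hc 0 i; have h3 := hc 1 i; rewrite !mxE in h1 h3.
rewrite (cl1 i si) in h1.
have he : e / 3 + e / 3 <= e by lra.
exact: (le_ball he (ball_triangle (ball_sym h1) h3)).
Qed.
End Simul.



Theorem lemma5p5 (R : realType) (X Y : metricType R)
  (T Tinv : X -> X) (S Sinv : Y -> Y) (pi : X -> Y)
  (cX : compact [set: X]) (cY : compact [set: Y])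
  (hT : continuous T) (hTinv : continuous Tinv)
  (hTK : cancel T Tinv) (hTinvK : cancel Tinv T)
  (hS : continuous S) (hSinv : continuous Sinv)
  (hSK : cancel S Sinv) (hSinvK : cancel Sinv S)
  (minX : minimal_sys T Tinv) (minY : minimal_sys S Sinv)
  (hpi : continuous pi) (pi_onto : pi @` [set: X] = [set: Y])
  (pi_equiv : forall x, pi (T x) = S (pi x)) :
  (forall d : nat, pid pi d @` Nd T Tinv d = Nd S Sinv d) /\
  (ext_almost_one_to_one [set: X] [set: Y] pi ->
     forall d : nat,
       ext_almost_one_to_one (Nd T Tinv d) (Nd S Sinv d) (pid pi d)) /\
  (ext_proximal (iterz T Tinv) [set: X] pi ->
     forall d : nat,
       ext_proximal (tau T Tinv d) (Nd T Tinv d) (pid pi d)) /\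
  (ext_equicontinuous (iterz T Tinv) [set: X] pi ->
     forall d : nat,
       ext_equicontinuous (tau T Tinv d) (Nd T Tinv d) (pid pi d)) /\
  (ext_distal (iterz T Tinv) [set: X] pi ->
     forall d : nat,
       ext_distal (tau T Tinv d) (Nd T Tinv d) (pid pi d)).
Proof.
have ieq := iterz_equiv T Tinv S Sinv pi hTK hTinvK hSK hSinvK pi_equiv.
have pient d (M M' : 'rV[X]_d) j : pid pi d M = pid pi d M' -> pi (M 0 j) = pi (M' 0 j).
  move=> h; have := congr1 (fun N : 'rV[Y]_d => N 0 j) h.
  by rewrite /pid !mxE.
split.
  move=> d; rewrite /Nd /pid.
  rewrite (image_closure _ _ (mx_compact _ _ cX)
    (map_mx_ball_cont 1 d _ (cont_ball_cont _ hpi)) (@mx_ball_eq _ _ _ _)).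
  congr closure; rewrite predeqE => N; split.
    move=> [M [x [p [q ->]]] <-]; exists (pi x), p, q.
    by apply/matrixP => i j; rewrite !mxE ieq.
  move=> [y [p [q ->]]].
  have : [set: Y] y by [].
  rewrite -pi_onto => -[x _ <-].
  exists (\row_(i < d) iterz T Tinv (p + (i.+1)%:Z * q) x); first by exists x, p, q.
  by apply/matrixP => i j; rewrite !mxE ieq.
split.
  move=> [y0 [_ [x0 hx0]]] d.
  have px0 : pi x0 = y0.
    have : [set x0] x0 by [].
    by rewrite -hx0 => -[_ ->].
  exists (\row_(i < d) y0); split => //.
    apply: subset_closure; exists y0, 0, 0.
    by apply/matrixP => i j; rewrite !mxE mulr0 addr0.
  exists (\row_(i < d) x0); rewrite predeqE => M; split.
    move=> [_ /= hM]; apply/matrixP => i j; rewrite (ord1 i) mxE.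
    have : ([set: X] `&` pi @^-1` [set y0]) (M ord0 j).
      split => //=; have := congr1 (fun N : 'rV[Y]_d => N ord0 j) hM.
      by rewrite /pid !mxE.
    by rewrite hx0.
  move=> ->; split.
    apply: subset_closure; exists x0, 0, 0.
    by apply/matrixP => i j; rewrite !mxE mulr0 addr0.
  by apply/matrixP => i j; rewrite /pid !mxE px0.
split.
  move=> hprox d M M' _ _ hMM' e e0.
  pose P : 'M[X]_(2, d) := \matrix_(r, i) if r == 0 then M 0 i else M' 0 i.
  have hP i : pi (P 0 i) = pi (P 1 i).
    by rewrite !mxE /=; apply: pient.
  have [n hn] := simul T Tinv S Sinv pi cX hT hTinv hTK hTinvK hSK hSinvK
    hpi pi_equiv hprox d P hP (enum 'I_d) e e0.
  exists (n, 0); split => // i j; rewrite !mxE mulr0 addr0.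
  by have := hn j (mem_enum _ _); rewrite !mxE.
split.
  move=> heq d e e0.
  have [delta d0 hd] := heq e e0.
  exists delta => // M M' _ _ hMM' [_ hb] g; split => // i j; rewrite !mxE.
  exact: (hd _ _ I I (pient _ _ _ j hMM') (hb 0 j)).
move=> hdist d M M' _ _ hMM' hprox.
apply/matrixP => i j; rewrite (ord1 i).
apply: (hdist _ _ I I (pient _ _ _ j hMM')) => e e0.
have [[p q] [_ hb]] := hprox e e0.
exists (p + (j.+1)%:Z * q); have := hb 0 j; rewrite !mxE //.
Qed.
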